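(* Fix $q\in V(G)$ and let $D\in\operatorname{Div}(G)$. Then $D$ is $q$-reduced if and only if $D\in|D|_q$ and $b_q(D)<b_q(D')$ for every $D'\in|D|_q$ with $D'\ne D$.
   Context: $G$ is a finite connected multigraph without loop edges, with vertex set $V(G)$ and edge set $E(G)$. A divisor is an element $D=\sum_{v}D(v)(v)$ of the free abelian group $\operatorname{Div}(G)$ on $V(G)$; $\deg(D)=\sum_vD(v)$. The Laplacian $\Delta$ sends a function $f:V(G)\to\mathbb{Q}$ to $\Delta(f)=\sum_v\Delta_v(f)(v)$ with $\Delta_v(f)=\sum_{\{v,w\}\in E(G)}(f(v)-f(w))$ (edges counted with multiplicity). $D_1\sim D_2$ means $D_1-D_2=\Delta(f)$ for some integer-valued $f$. For $q\in V(G)$, $|D|_q=\{E\in\operatorname{Div}(G): E\sim D,\ E(v)\ge 0\text{ for all }v\ne q\}$. For $A\subseteq V(G)$ and $v\in A$, $\operatorname{outdeg}_A(v)$ is the number of edges joining $v$ to $V(G)\setminus A$. A divisor $D$ is $q$-reduced if (i) $D(v)\ge 0$ for all $v\ne q$, and (ii) for every non-empty $A\subseteq V(G)\setminus\{q\}$ there is $v\in A$ with $D(v)<\operatorname{outdeg}_A(v)$. $Q$ is the Laplacian matrix with respect to a labeling of $V(G)$. For degree-zero divisors $D_1,D_2$, the energy pairing is $\langle D_1,D_2\rangle=[D_1]^TL[D_2]$ for any generalized inverse $L$ of $Q$ ($QLQ=Q$), independent of $L$. For divisors $D,E$, $\langle D,E\rangle_q=\langle D-\deg(D)(q),\,E-\deg(E)(q)\rangle$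 and $b_q(D)=\langle\mathbf{1},D\rangle_q$ with $\mathbf{1}=\sum_{v\in V(G)}(v)$. *)

(* Defs.v *)
(* Vertices of G are labelled 'I_n; a loopless multigraph is
   given by an edge-multiplicity function m : 'I_n -> 'I_n -> nat. *)
From HB Require Import structures.
From mathcomp Require Import all_boot all_order all_algebra.
Set Implicit Arguments. Unset Strict Implicit. Unset Printing Implicit Defensive.
Import Order.TTheory GRing.Theory Num.Theory.
Local Open Scope ring_scope.

Definition mgraph (n : nat) := 'I_n -> 'I_n -> nat.

Definition is_graph (n : nat) (m : mgraph n) : Prop :=
  (forall u v, m u v = m v u) /\ (forall v, m v v = 0%N) /\
  (forall u v, connect (fun x y => (0 < m x y)%N) u v).

Definition divisor (n : nat) := {ffun 'I_n -> int}.

Definition degD n (D : divisor n) : int := \sum_i D i.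

Definition lap n (m : mgraph n) (f : 'I_n -> int) (v : 'I_n) : int :=
  \sum_w (m v w)%:Z * (f v - f w).

Definition lin_equiv n (m : mgraph n) (D1 D2 : divisor n) : Prop :=
  exists f : 'I_n -> int, forall v, D1 v - D2 v = lap m f v.

Definition linsys n (m : mgraph n) (q : 'I_n) (D E : divisor n) : Prop :=
  lin_equiv m E D /\ (forall v, v != q -> 0 <= E v).

Definition outdeg n (m : mgraph n) (A : {set 'I_n}) (v : 'I_n) : int :=
  (\sum_(w in ~: A) m v w)%N%:Z.

Definition q_reduced n (m : mgraph n) (q : 'I_n) (D : divisor n) : Prop :=
  (forall v, v != q -> 0 <= D v) /\
  (forall A : {set 'I_n}, A != set0 -> q \notin A ->
     exists2 v, v \in A & D v < outdeg m A v).

Definition lapmx n (m : mgraph n) : 'M[rat]_n :=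
  \matrix_(i, j) (if i == j then (\sum_k m i k)%N%:R else - (m i j)%:R).

Definition colD n (D : divisor n) : 'cV[rat]_n := \col_i ((D i)%:~R).

(* energy pairing computed with a given generalized inverse L of Q *)
Definition energy n (L : 'M[rat]_n) (D1 D2 : divisor n) : rat :=
  ((colD D1)^T *m L *m colD D2) 0 0.

Definition delta n (q : 'I_n) : divisor n := [ffun v => (v == q)%:Z].

Definition shiftq n (q : 'I_n) (D : divisor n) : divisor n :=
  [ffun v => D v - degD D * delta q v].

Definition energy_q n (L : 'M[rat]_n) (q : 'I_n) (D E : divisor n) : rat :=
  energy L (shiftq q D) (shiftq q E).

Definition one_div n : divisor n := [ffun _ => 1].

Definition b_q n (L : 'M[rat]_n) (q : 'I_n) (D : divisor n) : rat :=
  energy_q L q (one_div n) D.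

(* Main.v *)
Require Import Defs.
From HB Require Import structures.
From mathcomp Require Import all_boot all_order all_algebra.
From mathcomp Require Import zify.
Import Order.TTheory GRing.Theory Num.Theory.
Local Open Scope ring_scope.
Set Implicit Arguments. Unset Strict Implicit.

Lemma PoszSum (I : finType) (P : pred I) (F : I -> nat) :
  ((\sum_(i | P i) F i)%N)%:Z = \sum_(i | P i) (F i)%:Z.
Proof. exact: (big_morph Posz PoszD (erefl _)). Qed.

Lemma lapmx_col n (m : mgraph n) (hl : forall v, m v v = 0%N) (g : 'I_n -> rat) i :
  (lapmx m *m \col_j g j) i 0 = \sum_w (m i w)%:R * (g i - g w).
Proof.
rewrite !mxE.
transitivity (\sum_k (((i == k)%:R * (\sum_k m i k)%N%:R - (m i k)%:R) * g k)).
  apply: eq_bigr => k _; rewrite !mxE.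
  case: eqP => [<-|_]; first by rewrite hl subr0 mul1r.
  by rewrite mul0r sub0r.
rewrite (eq_bigr (fun k => (i == k)%:R * (\sum_k m i k)%N%:R * g k - (m i k)%:R * g k));
  last by move=> k _; rewrite mulrBl.
rewrite sumrB (bigD1 i) //= eqxx mul1r [X in (_ + X) - _]big1 ?addr0; last first.
  by move=> k hk; rewrite eq_sym (negbTE hk) !mul0r.
rewrite natr_sum mulr_suml -sumrB; apply: eq_bigr => w _.
by rewrite mulrBr.
Qed.

Lemma lap_sum0 n (m : mgraph n) (hs : forall u v, m u v = m v u) f :
  \sum_v lap m f v = 0.
Proof.
rewrite /lap.
rewrite (eq_bigr (fun v => \sum_w (m v w)%:Z * f v - \sum_w (m v w)%:Z * f w));
  last by move=> v _; rewrite -sumrB; apply: eq_bigr => w _; rewrite mulrBr.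
rewrite sumrB exchange_big /=.
apply/eqP; rewrite subr_eq0; apply/eqP; apply: eq_bigr => v _; apply: eq_bigr => w _.
by rewrite hs.
Qed.

Lemma ker_const n (m : mgraph n) (G : is_graph m) (u : 'rV[rat]_n) :
  u *m lapmx m = 0 -> forall i j, u 0 i = u 0 j.
Proof.
case: G => hs [hl conn] Hu.
have hsym : (lapmx m)^T = lapmx m.
  apply/matrixP => a b; rewrite !mxE eq_sym; case: eqP => [->|] //; by rewrite hs.
have ucol : u^T = \col_j u 0 j by apply/matrixP => a b; rewrite !mxE ord1.
have H i : \sum_w (m i w)%:R * (u 0 i - u 0 w) = 0.
  rewrite -(lapmx_col hl (fun j => u 0 j)) -ucol -hsym -trmx_mul Hu.
  by rewrite trmx0 mxE.
suff Hall : forall v0, (forall k, u 0 k <= u 0 v0) -> forall j, u 0 j = u 0 v0.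
  move=> i j.
  have [v0 _ Hmax] := @arg_maxP _ _ _ i xpredT (fun k => u 0 k) isT.
  have Hm : forall k, u 0 k <= u 0 v0 by move=> k; exact: Hmax.
  by rewrite (Hall v0 Hm i) (Hall v0 Hm j).
move=> v0 Hm.
have step x y : (0 < m x y)%N -> u 0 x = u 0 v0 -> u 0 y = u 0 v0.
  move=> hxy hx.
  have hp : forall w, true -> 0 <= (m x w)%:R * (u 0 x - u 0 w) :> rat.
    move=> w _; apply: mulr_ge0; first exact: ler0n.
    by rewrite subr_ge0 hx.
  have := psumr_eq0P hp (H x) (i := y) isT.
  move/eqP; rewrite mulf_eq0 pnatr_eq0 subr_eq0.
  case/orP => [/eqP hm|/eqP <-] //.
  by rewrite hm in hxy.
have cl : closed (fun x y => (0 < m x y)%N) [pred x | u 0 x == u 0 v0].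
  move=> x y hxy; rewrite !inE; apply/eqP/eqP.
    exact: step.
  by apply: step; rewrite hs.
move=> j.
have := closed_connect cl (conn v0 j).
by rewrite !inE eqxx => /esym/eqP.
Qed.

Lemma deg0_sub n (m : mgraph n) (G : is_graph m) (q : 'I_n) (X : divisor n) :
  degD X = 0 -> ((colD X)^T <= lapmx m)%MS.
Proof.
move=> hX.
have hl : forall v, m v v = 0%N by case: G => _ [].
set Q := lapmx m. set x := (colD X)^T.
have rQ : (n <= (\rank Q).+1)%N.
  have: (\rank (kermx Q) <= 1)%N.
    apply: leq_trans (rank_leq_row (const_mx 1 : 'rV[rat]_n)).
    apply: mxrankS; apply/row_subP => i.
    have Hr : row i (kermx Q) *m Q = 0 by rewrite -row_mul mulmx_ker row0.
    have hc := ker_const G Hr.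
    have -> : row i (kermx Q) = (row i (kermx Q) 0 q) *: const_mx 1.
      apply/matrixP=> a b; rewrite ord1 [in RHS]mxE [const_mx _ _ _]mxE mulr1.
      exact: hc.
    exact: scalemx_sub.
  rewrite mxrank_ker; lia.
have Q1 : Q *m (const_mx 1 : 'cV[rat]_n) = 0.
  have -> : (const_mx 1 : 'cV[rat]_n) = \col_(j < n) (1:rat) by apply/matrixP => a b; rewrite !mxE.
  apply/matrixP => a b; rewrite ord1 (lapmx_col hl (fun _ => 1)) mxE.
  by rewrite big1 // => w _; rewrite subrr mulr0.
have x1 : x *m (const_mx 1 : 'cV[rat]_n) = 0.
  apply/matrixP => a b; rewrite [a]ord1 [b]ord1 !mxE.
  under eq_bigr do rewrite !mxE mulr1.
  by rewrite -rmorph_sum /= -/(degD X) hX.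
have one0 : (const_mx 1 : 'rV[rat]_n) != 0.
  by apply/eqP => /matrixP /(_ 0 q); rewrite !mxE => /eqP; rewrite oner_eq0.
have rC : (1 <= n - \rank (col_mx Q x))%N.
  rewrite -(mxrank_tr (col_mx Q x)) -mxrank_ker.
  apply: (@leq_trans (\rank (const_mx 1 : 'rV[rat]_n))); first by rewrite rank_rV one0.
  apply: mxrankS; rewrite sub_kermx.
  have -> : (const_mx 1 : 'rV[rat]_n) = (const_mx 1 : 'cV[rat]_n)^T by rewrite trmx_const.
  by rewrite -trmx_mul mul_col_mx Q1 x1 col_mx0 trmx0.
have le := mxrank_leqif_sup (addsmxSl Q x).
have : \rank Q == \rank (Q + x)%MS.
  rewrite eqn_leq le.1 /=.
  have -> : \rank (Q + x)%MS = \rank (col_mx Q x) by rewrite addsmxE.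
  lia.
rewrite le.2 => hs.
exact: submx_trans (addsmxSr Q x) hs.
Qed.

Lemma lap_cast n (m : mgraph n) f i :
  ((lap m f i)%:~R : rat) = \sum_w (m i w)%:R * ((f i)%:~R - (f w)%:~R).
Proof.
rewrite /lap rmorph_sum; apply: eq_bigr => w _.
by rewrite rmorphM rmorphB.
Qed.

Lemma bq_shift n (m : mgraph n) (G : is_graph m) (L : 'M[rat]_n)
  (HL : lapmx m *m L *m lapmx m = lapmx m) (q : 'I_n) (D D' : divisor n)
  (f : 'I_n -> int) :
  (forall v, D' v - D v = lap m f v) ->
  b_q L q D' = b_q L q D + ((\sum_v f v) - n%:Z * f q)%:~R.
Proof.
move=> hD.
have [hs [hl _]] := G.
have hdeg : degD D' = degD D.
  apply/eqP; rewrite -subr_eq0 /degD -sumrB.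
  by rewrite (eq_bigr _ (fun v _ => hD v)) lap_sum0.
set X := shiftq q (one_div n).
have hdq : \sum_v (v == q)%:Z = 1.
  by rewrite (bigD1 q) //= eqxx big1 ?addr0 // => v /negbTE ->.
have hX : degD X = 0.
  rewrite /degD /X /shiftq.
  under eq_bigr do rewrite ffunE.
  rewrite sumrB -mulr_sumr.
  under [X in _ - _ * X]eq_bigr do rewrite ffunE.
  rewrite hdq mulr1 /degD.
  by under eq_bigr do rewrite ffunE; rewrite subrr.
set F : 'cV[rat]_n := \col_j (f j)%:~R.
have hcol : colD (shiftq q D') = colD (shiftq q D) + lapmx m *m F.
  apply/matrixP => i j; rewrite ord1 mxE [in RHS]mxE (lapmx_col hl) !mxE !ffunE hdeg.
  rewrite -[D' i](subrK (D i)) hD.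
  by rewrite -lap_cast -rmorphD /= [in RHS]addrC addrA.
rewrite /b_q /energy_q /energy hcol mulmxDr mxE; congr (_ + _).
rewrite -/X.
set g := (colD X)^T *m pinvmx (lapmx m).
have hg : (colD X)^T = g *m lapmx m by rewrite mulmxKpV // (deg0_sub G q hX).
rewrite [in LHS]hg !mulmxA -(mulmxA g) -(mulmxA g) HL -hg.
rewrite mxE.
under eq_bigr do rewrite !mxE.
under eq_bigr do rewrite -rmorphM.
rewrite -rmorph_sum /=; congr (_%:~R).
rewrite /X /shiftq.
under eq_bigr do rewrite !ffunE mulrBl mul1r.
rewrite sumrB; congr (_ - _).
have hone : degD (one_div n) = n%:Z.
  rewrite /degD; under eq_bigr do rewrite ffunE.
  by rewrite sumr_const card_ord natz.
rewrite hone (bigD1 q) //= eqxx mulr1 big1 ?addr0 // => v /negbTE ->.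
by rewrite mulr0 mul0r.
Qed.

Unset Implicit Arguments. Set Strict Implicit.

Theorem mainTheorem10 (n : nat) (m : mgraph n) (L : 'M[rat]_n)
  (q : 'I_n) (D : divisor n) :
  is_graph m -> lapmx m *m L *m lapmx m = lapmx m ->
  q_reduced m q D <->
  (linsys m q D D /\
   forall D' : divisor n, linsys m q D D' -> D' != D -> b_q L q D < b_q L q D').
Proof.
move=> G HL.
have [hs [hl _]] := G.
split.
- case=> Hnn Hred; split.
    split; last exact: Hnn.
    exists (fun _ => 0) => v; rewrite subrr /lap big1 // => w _.
    by rewrite subrr mulr0.
  move=> D' [[f hf] Hnn'] hne.
  rewrite (@bq_shift _ _ G L HL q D D' f hf) ltrDl ltr0z.
  have [v0 _ Hmin] := @arg_minP _ _ _ q xpredT f isT.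
  have Hm : forall k, f v0 <= f k by move=> k; exact: Hmin.
  have fq : f q = f v0.
    apply/eqP; apply/negPn/negP => hneq.
    set A := [set v | f v == f v0].
    have hA : A != set0 by apply/set0Pn; exists v0; rewrite inE.
    have hqA : q \notin A by rewrite inE.
    have [v hv hlt] := Hred A hA hqA.
    have hvq : v != q by apply: contraNneq hqA => <-.
    have := Hnn' v hvq.
    have -> : D' v = D v + lap m f v by rewrite -hf addrC subrK.
    apply/negP; rewrite -ltNge.
    apply: (@le_lt_trans _ _ (D v - outdeg m A v)); last by rewrite subr_lt0.
    rewrite lerD2l /lap (bigID (fun w => w \in A)) /= big1; last first.
      move=> w hw; move: hv hw; rewrite !inE => /eqP -> /eqP ->.
      by rewrite subrr mulr0.
    rewrite add0r /outdeg PoszSum -sumrN.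
    rewrite [X in _ <= X](eq_bigl (fun w => w \notin A)); last by move=> w; rewrite in_setC.
    apply: ler_sum => w hw.
    rewrite -[X in _ <= X]mulrN1; apply: ler_wpM2l => //.
    move: hv hw; rewrite !inE => /eqP ->.
    move=> hw; have := Hm w; rewrite le_eqVlt eq_sym (negbTE hw) /=.
    by rewrite -subr_lt0; move=> h; lia.
  have -> : \sum_v f v - n%:Z * f q = \sum_v (f v - f q).
    by rewrite sumrB sumr_const card_ord -mulr_natl natz.
  have hge : forall v, true -> 0 <= f v - f q by move=> v _; rewrite fq subr_ge0.
  rewrite lt_neqAle sumr_ge0 // andbT.
  apply/eqP => h0.
  have hall : forall v, f v = f q.
    move=> v; apply/eqP; rewrite -subr_eq0; apply/eqP.
    exact: (psumr_eq0P hge (esym h0) (i := v)).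
  move/eqP: hne; apply; apply/ffunP => v.
  apply/eqP; rewrite -subr_eq0 hf /lap; apply/eqP.
  by rewrite big1 // => w _; rewrite !hall subrr mulr0.
- case=> [[_ Hnn] Hmin]; split; first exact: Hnn.
  move=> A hA hq.
  case: (boolP [exists v in A, D v < outdeg m A v]) => [/exists_inP [v hv hlt]|hno].
    by exists v.
  exfalso.
  move: hno; rewrite negb_exists_in => /forall_inP Hge.
  set f := fun v : 'I_n => - (v \in A)%:Z.
  set D' : divisor n := [ffun v => D v + lap m f v].
  have hlin : forall v, D' v - D v = lap m f v.
    by move=> v; rewrite ffunE addrAC subrr add0r.
  have hlap_in v : v \in A -> lap m f v = - outdeg m A v.
    move=> hv; rewrite /lap /f hv (bigID (fun w => w \in A)) /= big1; last first.
      by move=> w ->; rewrite subrr mulr0.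
    rewrite add0r /outdeg PoszSum -sumrN.
    rewrite [RHS](eq_bigl (fun w => w \notin A)); last by move=> w; rewrite in_setC.
    apply: eq_bigr => w /negbTE ->.
    by rewrite /= subr0 mulrN1.
  have hlap_out v : v \notin A -> 0 <= lap m f v.
    move=> hv; rewrite /lap /f (negbTE hv) /=; apply: sumr_ge0 => w _.
    by apply: mulr_ge0 => //; rewrite sub0r opprK.
  have Hlin : linsys m q D D'.
    split; first by exists f; exact: hlin.
    move=> v hv; rewrite ffunE; case: (boolP (v \in A)) => hvA.
      rewrite hlap_in // subr_ge0; move: (Hge v hvA); by rewrite -leNgt.
    by apply: addr_ge0; [exact: Hnn | exact: hlap_out].
  have hb := @bq_shift _ _ G L HL q D D' f hlin.
  have hneg : \sum_v f v - n%:Z * f q < 0.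
    rewrite /f (negbTE hq) /= oppr0 mulr0 subr0.
    have [v0 hv0] := set0Pn _ hA.
    rewrite (bigD1 v0) //= hv0 /=.
    have : \sum_(i < n | i != v0) - ((i \in A) : int) <= 0.
      by apply: sumr_le0 => i _; rewrite oppr_le0.
    move=> h; apply: (@le_lt_trans _ _ (-1 + 0)); first by rewrite lerD2l.
    by [].
  have hlt : b_q L q D' < b_q L q D.
    by rewrite hb gtrDl ltrz0.
  have hne : D' != D.
    by apply/eqP => e; move: hlt; rewrite e ltxx.
  have := Hmin D' Hlin hne.
  by rewrite ltNge (ltW hlt).
Qed.
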